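(* Let $r\ge1$, $\mathbf{m}=(m_1,\ldots,m_r)\in\mathbb{N}^r$, $m=m_1+\cdots+m_r$, $\mathbf{f}\in\mathbb{C}^r$ with $(\mathbf{f})_{\mathbf{m}}\neq0$ and no $f_i$ a non-positive integer, and $a,b,c\in\mathbb{C}$ with $c\notin\{0,-1,-2,\ldots\}$. Then for $|x|<1$ $$ {}_{r+2}F_{r+1}\!\left(\begin{matrix}a,b,\mathbf{f}+\mathbf{m}\\ c,\mathbf{f}\end{matrix}\,\middle|\, x\right) =\frac{1}{(\mathbf{f})_{\mathbf{m}}}\sum_{k=0}^m(-1)^kD_k\,(b)_k\,{}_{2}F_{1}\!\left(\begin{matrix}a,b+k\\ c\end{matrix}\,\middle|\, x\right), $$ where $D_k=\sum_{j=k}^m\alpha_j\mathbf{S}_j^{(k)}=\frac{(-1)^k(\mathbf{f}-b)_{\mathbf{m}}}{k!}{}_{r+1}F_{r}\!\left(\begin{matrix}-k,1-\mathbf{f}+b\\1-\mathbf{f}+b-\mathbf{m}\end{matrix}\right)$ and $(\mathbf{f}-b-t)_{\mathbf{m}}=\sum_{j=0}^m\alpha_jt^j$.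
   Context: $(a)_k=\Gamma(a+k)/\Gamma(a)$. For vectors: $(\mathbf{f})_{\mathbf{m}}=\prod_i(f_i)_{m_i}$, $\mathbf{f}+\alpha$ and $\mathbf{f}+\mathbf{m}$ componentwise; a vector among hypergeometric parameters means its components are listed. ${}_pF_q(\mathbf{a};\mathbf{b};x)=\sum_{n\ge0}\frac{(a_1)_n\cdots(a_p)_n}{(b_1)_n\cdots(b_q)_n}\frac{x^n}{n!}$, and ${}_pF_q(\mathbf{a};\mathbf{b})$ means the value at $x=1$. $\mathbf{S}_j^{(k)}$ are Stirling numbers of the second kind. *)

(* Defs.v *)
From Stdlib Require Import Arith Factorial Reals List ClassicalEpsilon.
From Coquelicot Require Import Coquelicot.
Open Scope C_scope.

Fixpoint csum (g : nat -> C) (n : nat) : C :=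
  match n with O => RtoC 0 | S n' => csum g n' + g n' end.

Fixpoint cprod (g : nat -> C) (n : nat) : C :=
  match n with O => RtoC 1 | S n' => cprod g n' * g n' end.

Definition cpow (z : C) (n : nat) : C := cprod (fun _ => z) n.

Definition poch (a : C) (k : nat) : C := cprod (fun l => a + RtoC (INR l)) k.

Definition poch_vec (f : list C) (m : list nat) : C :=
  fold_right (fun p acc => poch (fst p) (snd p) * acc) (RtoC 1) (combine f m).

Definition vadd (f : list C) (m : list nat) : list C :=
  map (fun p => fst p + RtoC (INR (snd p))) (combine f m).

Definition hyp_term (as_ bs : list C) (x : C) (n : nat) : C :=
  fold_right (fun a acc => poch a n * acc) (RtoC 1) as_
  / fold_right (fun b acc => poch b n * acc) (RtoC 1) bs
  * cpow x n / RtoC (INR (fact n)).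

(* value of pFq(as; bs | x): the sum of the series (chosen by epsilon; it is
   meaningful whenever the series converges) *)
Definition hypF (as_ bs : list C) (x : C) : C :=
  epsilon (inhabits (RtoC 0))
    (fun l => is_series (V := C_NormedModule) (hyp_term as_ bs x) l).

Fixpoint stirling2 (j k : nat) : nat :=
  match j, k with
  | O, O => 1
  | O, S _ => 0
  | S _, O => 0
  | S j', S k' => stirling2 j' k' + S k' * stirling2 j' (S k')
  end.

Fixpoint sumn (m : list nat) : nat :=
  match m with nil => O | cons a t => (a + sumn t)%nat end.

(* Main.v *)
Require Import Defs.
From Stdlib Require Import Arith Factorial Reals List Lia Lra Psatz ClassicalEpsilon.
From Coquelicot Require Import Coquelicot.
Open Scope C_scope.

Lemma RC1 : RtoC 1 = 1. Proof. reflexivity. Qed.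
Lemma RC0 : RtoC 0 = 0. Proof. reflexivity. Qed.
Lemma RC_INR_S n : RtoC (INR (S n)) = RtoC (INR n) + 1.
Proof. rewrite S_INR, RtoC_plus. reflexivity. Qed.
Lemma RC_INR_add n k : RtoC (INR (n + k)) = RtoC (INR n) + RtoC (INR k).
Proof. rewrite plus_INR, RtoC_plus. reflexivity. Qed.

Lemma poch_S a n : poch a (S n) = poch a n * (a + RtoC (INR n)).
Proof. reflexivity. Qed.
Lemma poch_0 a : poch a 0 = 1.
Proof. reflexivity. Qed.

Lemma poch_add a n k : poch a (n + k) = poch a n * poch (a + RtoC (INR n)) k.
Proof.
  induction k.
  - rewrite Nat.add_0_r, poch_0. ring.
  - rewrite Nat.add_succ_r, !poch_S, IHk, RC_INR_add. ring.
Qed.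

Lemma poch_S_left a n : poch a (S n) = a * poch (a + 1) n.
Proof.
  change (S n) with (1 + n)%nat. rewrite poch_add.
  replace (poch a 1) with a by (unfold poch, cprod; simpl INR; rewrite ?RC0, ?RC1; ring).
  simpl INR. reflexivity.
Qed.

Lemma poch_neg_zero k n : (k < n)%nat -> poch (- RtoC (INR k)) n = 0.
Proof.
  intros H. replace n with (S k + (n - S k))%nat by lia.
  rewrite poch_add, poch_S. ring_simplify. reflexivity.
Qed.

Lemma poch_nz a n : (forall l, a <> - RtoC (INR l)) -> poch a n <> 0.
Proof.
  intros H. induction n.
  - rewrite poch_0. intro E. injection E. lra.
  - rewrite poch_S. apply Cmult_neq_0; auto.
    intro E. apply (H n). replace a with (a + RtoC (INR n) - RtoC (INR n)) by ring. rewrite E. ring.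
Qed.

Lemma csum_ext (g h : nat -> C) n : (forall k, (k < n)%nat -> g k = h k) -> csum g n = csum h n.
Proof. induction n; intros H; simpl; auto. rewrite IHn, H; auto. Qed.

Lemma csum_plus (g h : nat -> C) n : csum (fun k => g k + h k) n = csum g n + csum h n.
Proof. induction n; simpl. ring. rewrite IHn. ring. Qed.

Lemma csum_scal (c : C) (g : nat -> C) n : csum (fun k => c * g k) n = c * csum g n.
Proof. induction n; simpl. ring. rewrite IHn. ring. Qed.

Lemma csum_zero n : csum (fun _ => 0) n = 0.
Proof. induction n; simpl. reflexivity. rewrite IHn. ring. Qed.

Lemma csum_shift (g : nat -> C) n : csum g (S n) = g O + csum (fun k => g (S k)) n.
Proof. induction n. simpl. ring.
  change (csum g (S (S n))) with (csum g (S n) + g (S n)). rewrite IHn. simpl. ring. Qed.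

Lemma csum_swap (g : nat -> nat -> C) n p :
  csum (fun k => csum (fun j => g j k) p) n = csum (fun j => csum (fun k => g j k) n) p.
Proof.
  induction n; simpl.
  - rewrite csum_zero. reflexivity.
  - rewrite IHn, <- csum_plus. reflexivity.
Qed.

Lemma csum_trunc (g : nat -> C) n p : (forall k, (n <= k)%nat -> g k = 0) -> (n <= p)%nat -> csum g p = csum g n.
Proof.
  intros H Hp. induction Hp. reflexivity. simpl. rewrite IHHp, H by lia. ring.
Qed.

Lemma sum_n_csum (a : nat -> C) n : @sum_n C_NormedModule a n = csum a (S n).
Proof.
  induction n.
  - rewrite sum_O. simpl. ring.
  - rewrite sum_Sn, IHn. reflexivity.
Qed.

Lemma is_series_fin (a : nat -> C) N : (forall n, (N < n)%nat -> a n = 0) ->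
  is_series (V := C_NormedModule) a (csum a (S N)).
Proof.
  intros H. unfold is_series.
  apply filterlim_ext_loc with (f := fun _ => csum a (S N)).
  - exists N. intros n Hn. rewrite sum_n_csum. symmetry. apply (csum_trunc a (S N) (S n)); [|lia].
    intros k Hk. apply H. lia.
  - apply filterlim_const.
Qed.

Lemma is_series_zero : is_series (V := C_NormedModule) (fun _ => RtoC 0) (RtoC 0).
Proof.
  assert (E: csum (fun _ : nat => RtoC 0) 1 = RtoC 0) by (simpl; ring).
  pose proof (is_series_fin (fun _ => RtoC 0) 0 (fun _ _ => eq_refl)) as H.
  rewrite E in H. exact H.
Qed.

Lemma is_series_csum (u : nat -> nat -> C) (l : nat -> C) N :
  (forall k, (k < N)%nat -> is_series (V := C_NormedModule) (u k) (l k)) ->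
  is_series (V := C_NormedModule) (fun n => csum (fun k => u k n) N) (csum l N).
Proof.
  induction N; intros H; simpl.
  - apply is_series_zero.
  - apply (is_series_plus (V := C_NormedModule)); auto.
Qed.

Lemma is_series_scalC (c : C) (a : nat -> C) l : is_series (V := C_NormedModule) a l ->
  is_series (V := C_NormedModule) (fun n => c * a n) (c * l).
Proof. intros H. apply (is_series_scal (V := C_NormedModule) c a l H). Qed.

Lemma is_series_uniqC (a : nat -> C) l1 l2 : is_series (V := C_NormedModule) a l1 ->
  is_series (V := C_NormedModule) a l2 -> l1 = l2.
Proof. intros H1 H2. exact (filterlim_locally_unique _ _ _ H1 H2). Qed.

Lemma hypF_spec as_ bs x l : is_series (V := C_NormedModule) (hyp_term as_ bs x) l -> hypF as_ bs x = l.
Proof.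
  intros H. unfold hypF.
  pose proof (epsilon_spec (inhabits (RtoC 0))
    (fun l => is_series (V := C_NormedModule) (hyp_term as_ bs x) l) (ex_intro _ l H)) as H2.
  eapply is_series_uniqC; eauto.
Qed.

Lemma key_ineq (A B Cc y : R) : (0 <= A)%R -> (0 <= B)%R -> (0 <= Cc)%R -> (0 <= y < 1)%R ->
  exists N : nat, forall n : nat, (N <= n)%nat ->
    (Cc < INR n)%R /\
    ((A + INR n) * (B + INR n) * y <= (1 + y) / 2 * ((INR n - Cc) * (INR n + 1)))%R.
Proof.
  intros HA HB HC Hy.
  set (e := ((1 - y) / 2)%R). set (SS := (2 * Cc + A + B + A * B + 1)%R).
  assert (He : (0 < e <= 1/2)%R) by (unfold e; lra).
  destruct (INR_unbounded (SS / e + 1)) as [N HN].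
  exists N. intros n Hn.
  assert (Hn' : (SS / e + 1 <= INR n)%R).
  { apply le_INR in Hn. lra. }
  assert (HS : (SS / e >= 2 * SS)%R).
  { unfold Rdiv. assert (/ e >= 2)%R.
    { replace 2%R with (/ (1/2))%R by field. apply Rle_ge, Rinv_le_contravar; lra. }
    assert (0 <= SS)%R by (unfold SS; nra). nra. }
  assert (HS0 : (0 <= SS)%R) by (unfold SS; nra).
  set (t := INR n) in *.
  assert (Ht1 : (1 <= t)%R) by lra.
  assert (Het : (e * t >= SS)%R).
  { assert (E : (e * (SS / e + 1) = SS + e)%R) by (field; lra).
    assert (e * t >= e * (SS / e + 1))%R by (apply Rle_ge, Rmult_le_compat_l; lra). lra. }
  assert (HSC : (SS >= Cc)%R) by (subst SS; nra).
  split. lra.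
  assert (H1 : (e * t * t >= SS * t)%R) by nra.
  assert (H2 : ((1+y)/2 * Cc * t <= Cc * t)%R). { assert (0 <= Cc * t)%R by (apply Rmult_le_pos; lra). nra. }
  assert (H3 : ((1+y)/2 * Cc <= Cc * t)%R) by nra.
  assert (H4 : (y * (A+B) * t <= (A+B) * t)%R). { assert (0 <= (A+B) * t)%R by (apply Rmult_le_pos; lra). nra. }
  assert (H5 : (y * (A*B) <= A * B * t)%R). { assert (0 <= A * B)%R by (apply Rmult_le_pos; lra). nra. }
  assert (H6 : (0 <= (1+y)/2 * t)%R) by nra.
  assert (Hq : ((1+y)/2 = 1 - e)%R) by (subst e; field).
  rewrite Hq. subst SS. nra.
Qed.

Lemma hyp2_step (a b c x : C) n : (forall l, c <> - RtoC (INR l)) ->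
  hyp_term (a :: b :: nil) (c :: nil) x (S n) =
  hyp_term (a :: b :: nil) (c :: nil) x n *
  ((a + RtoC (INR n)) * (b + RtoC (INR n)) * x / ((c + RtoC (INR n)) * (RtoC (INR n) + 1))).
Proof.
  intros Hc. unfold hyp_term. simpl fold_right.
  rewrite !poch_S. change (cpow x (S n)) with (cpow x n * x).
  rewrite fact_simpl, mult_INR, RtoC_mult, RC_INR_S.
  assert (H1 := poch_nz c n Hc).
  assert (H2 : c + RtoC (INR n) <> 0).
  { intro E. apply (Hc n). replace c with (c + RtoC (INR n) - RtoC (INR n)) by ring. rewrite E. ring. }
  assert (H3 : RtoC (INR (fact n)) <> 0).
  { intro E. apply (f_equal fst) in E. apply (INR_fact_neq_0 n). exact E. }
  assert (H4 : RtoC (INR n) + 1 <> 0).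
  { rewrite <- RC_INR_S. intro E. apply (f_equal fst) in E. apply (not_0_INR (S n)); auto. }
  field. repeat split; auto.
Qed.

Lemma conv2F1 (a b c x : C) : (forall l, c <> - RtoC (INR l)) -> Cmod x < 1 ->
  exists l, is_series (V := C_NormedModule) (hyp_term (a :: b :: nil) (c :: nil) x) l.
Proof.
  intros Hc Hx.
  set (t := hyp_term (a :: b :: nil) (c :: nil) x).
  set (q := ((1 + Cmod x) / 2)%R).
  destruct (key_ineq (Cmod a) (Cmod b) (Cmod c) (Cmod x) (Cmod_ge_0 _) (Cmod_ge_0 _) (Cmod_ge_0 _)
     (conj (Cmod_ge_0 _) Hx)) as [N HN].
  assert (Hratio : forall n, (N <= n)%nat -> (Cmod (t (S n)) <= Cmod (t n) * q)%R).
  { intros n Hn. destruct (HN n Hn) as [Hgt Hle].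
    unfold t. rewrite hyp2_step by auto. rewrite Cmod_mult.
    apply Rmult_le_compat_l; [apply Cmod_ge_0|].
    assert (Hn0 : (0 <= INR n)%R) by apply pos_INR.
    assert (EC : forall z : C, (Cmod (z + RtoC (INR n)) <= Cmod z + INR n)%R).
    { intros z. eapply Rle_trans; [apply Cmod_triangle|]. rewrite Cmod_R, Rabs_pos_eq; lra. }
    assert (Ecn : (INR n - Cmod c <= Cmod (c + RtoC (INR n)))%R).
    { assert (E : RtoC (INR n) = (c + RtoC (INR n)) + - c) by ring.
      assert (HH := Cmod_triangle (c + RtoC (INR n)) (- c)). rewrite <- E, Cmod_opp, Cmod_R, Rabs_pos_eq in HH; lra. }
    assert (En1 : Cmod (RtoC (INR n) + 1) = (INR n + 1)%R).
    { rewrite <- RC_INR_S, Cmod_R, Rabs_pos_eq, S_INR; [reflexivity|]. apply pos_INR. }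
    assert (Hden : (c + RtoC (INR n)) * (RtoC (INR n) + 1) <> 0).
    { apply Cmult_neq_0.
      - intro E. rewrite E, Cmod_0 in Ecn. lra.
      - intro E. rewrite E, Cmod_0 in En1. lra. }
    rewrite Cmod_div by auto. rewrite !Cmod_mult, En1.
    apply Rle_trans with ((Cmod a + INR n) * (Cmod b + INR n) * Cmod x / ((INR n - Cmod c) * (INR n + 1)))%R.
    - unfold Rdiv. apply Rmult_le_compat.
      + apply Rmult_le_pos; [apply Rmult_le_pos|]; apply Cmod_ge_0.
      + apply Rlt_le, Rinv_0_lt_compat, Rmult_lt_0_compat; [rewrite <- (Rmult_1_l (Cmod _)); nra| lra].
      + apply Rmult_le_compat_r; [apply Cmod_ge_0|]. apply Rmult_le_compat; try apply Cmod_ge_0; apply EC.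
      + apply Rinv_le_contravar. apply Rmult_lt_0_compat; lra.
        apply Rmult_le_compat_r; lra.
    - apply Rmult_le_reg_r with ((INR n - Cmod c) * (INR n + 1))%R.
      apply Rmult_lt_0_compat; lra.
      unfold Rdiv. rewrite Rmult_assoc, Rinv_l. rewrite Rmult_1_r. unfold q. lra.
      apply Rgt_not_eq, Rmult_lt_0_compat; lra. }
  assert (Hgeom : forall p, (Cmod (t (N + p)%nat) <= Cmod (t N) * q ^ p)%R).
  { induction p.
    - rewrite Nat.add_0_r. simpl. lra.
    - rewrite Nat.add_succ_r. eapply Rle_trans; [apply Hratio; lia|].
      simpl. assert (0 <= q)%R by (unfold q; assert (H0 := Cmod_ge_0 x); lra). nra. }
  assert (Hex : ex_series (V := C_CompleteNormedModule) (fun p => t (N + p)%nat)).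
  { apply ex_series_le with (b := fun p => (Cmod (t N) * q ^ p)%R).
    - intros n. apply Hgeom.
    - apply (ex_series_scal_l (V := R_NormedModule) (Cmod (t N)) (fun p => q ^ p)%R).
      apply ex_series_geom. unfold q. assert (H0 := Cmod_ge_0 x). rewrite Rabs_pos_eq; lra. }
  apply (ex_series_incr_n (V := C_NormedModule) t N) in Hex.
  exact Hex.
Qed.

Definition ff (t : C) k := cprod (fun l => t - RtoC (INR l)) k.

Lemma ff_poch t k : cpow (- RtoC 1) k * poch (- t) k = ff t k.
Proof.
  induction k. unfold ff, cpow, poch; simpl; ring.
  change (cpow (- RtoC 1) (S k)) with (cpow (- RtoC 1) k * (- RtoC 1)).
  rewrite poch_S. unfold ff. simpl cprod. fold (ff t k). rewrite <- IHk. ring.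
Qed.

Lemma stirling2_zero j k : (j < k)%nat -> stirling2 j k = 0%nat.
Proof.
  revert k. induction j; intros k H.
  - destruct k; [lia|reflexivity].
  - destruct k; [lia|]. simpl. rewrite !IHj by lia. lia.
Qed.

Lemma stir_pow t j N : (j <= N)%nat ->
  cpow t j = csum (fun k => RtoC (INR (stirling2 j k)) * ff t k) (S N).
Proof.
  induction j; intros HjN.
  - rewrite csum_shift. rewrite (csum_ext _ (fun _ => RtoC 0)).
    + rewrite csum_zero. change (cpow t 0) with (RtoC 1). change (stirling2 0 0) with 1%nat. change (ff t 0) with (RtoC 1). change (INR 1) with 1%R. ring.
    + intros k _. simpl. ring.
  - change (cpow t (S j)) with (cpow t j * t). rewrite IHj by lia.
    set (s := fun k => RtoC (INR (stirling2 j k))).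
    transitivity (csum (fun k => s k * ff t (S k) + (RtoC (INR k) + 1) * s (S k) * ff t (S k)) N).
    + rewrite Cmult_comm, <- csum_scal.
      rewrite (csum_ext _ (fun k => s k * ff t (S k) + RtoC (INR k) * s k * ff t k)).
      2:{ intros k _. unfold ff. simpl cprod. fold (ff t k). unfold s. ring. }
      rewrite csum_plus. simpl csum at 1.
      replace (s N) with (RtoC 0) by (unfold s; rewrite stirling2_zero by lia; reflexivity).
      rewrite (csum_shift (fun k => RtoC (INR k) * s k * ff t k)).
      rewrite csum_plus.
      rewrite (csum_ext (fun k => (RtoC (INR k) + 1) * s (S k) * ff t (S k)) (fun k => RtoC (INR (S k)) * s (S k) * ff t (S k)))
        by (intros; rewrite RC_INR_S; reflexivity).
      change (INR 0) with 0%R. ring.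
    + rewrite csum_shift. change (stirling2 (S j) 0) with 0%nat. change (INR 0) with 0%R.
      transitivity (csum (fun k => RtoC (INR (stirling2 (S j) (S k))) * ff t (S k)) N).
      * apply csum_ext. intros k _. change (stirling2 (S j) (S k)) with (stirling2 j k + S k * stirling2 j (S k))%nat. rewrite plus_INR, mult_INR, RtoC_plus, RtoC_mult, RC_INR_S.
        unfold s. ring.
      * ring.
Qed.

Definition ee k n := poch (- RtoC (INR k)) n / RtoC (INR (fact n)).

Lemma fact_nz n : RtoC (INR (fact n)) <> 0.
Proof. intro E. apply (f_equal fst) in E. apply (INR_fact_neq_0 n). exact E. Qed.

Lemma RC_fact_S n : RtoC (INR (fact (S n))) = (RtoC (INR n) + 1) * RtoC (INR (fact n)).
Proof. rewrite fact_simpl, mult_INR, RtoC_mult, RC_INR_S. reflexivity. Qed.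

Lemma Sn_nz n : RtoC (INR n) + 1 <> 0.
Proof. rewrite <- RC_INR_S. intro E. apply (f_equal fst) in E. apply (not_0_INR (S n)); auto. Qed.

Lemma poch_neg_shift k n : poch (- RtoC (INR (S k))) (S n) = (- RtoC (INR (S k))) * poch (- RtoC (INR k)) n.
Proof.
  rewrite poch_S_left. f_equal. f_equal. rewrite RC_INR_S. ring.
Qed.

Lemma ee_E1 k n : RtoC (INR n) * ee (S k) n = RtoC (INR (S k)) * ee (S k) n - RtoC (INR (S k)) * ee k n.
Proof.
  unfold ee. assert (H := poch_neg_shift k n). rewrite poch_S in H.
  assert (Hf := fact_nz n).
  assert (key : RtoC (INR n) * poch (- RtoC (INR (S k))) n =
     RtoC (INR (S k)) * poch (- RtoC (INR (S k))) n - RtoC (INR (S k)) * poch (- RtoC (INR k)) n).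
  { rewrite RC_INR_S in *.
    replace (RtoC (INR n) * poch (- (RtoC (INR k) + 1)) n) with
      (poch (- (RtoC (INR k) + 1)) n * (- (RtoC (INR k) + 1) + RtoC (INR n)) + (RtoC (INR k) + 1) * poch (- (RtoC (INR k) + 1)) n) by ring.
    rewrite H. ring. }
  transitivity ((RtoC (INR n) * poch (- RtoC (INR (S k))) n) / RtoC (INR (fact n))).
  field; auto. rewrite key. field; auto.
Qed.

Lemma ee_E3 k n : ee (S k) (S n) = ee k (S n) - ee k n.
Proof.
  unfold ee. rewrite poch_neg_shift, RC_fact_S, poch_S.
  assert (Hf := fact_nz n). assert (Hs := Sn_nz n).
  rewrite RC_INR_S. field. auto.
Qed.

Lemma ee_0 k : ee k 0 = 1.
Proof. unfold ee. change (poch (- RtoC (INR k)) 0) with (RtoC 1). change (fact 0) with 1%nat.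
  change (INR 1) with 1%R. field. Qed.

Lemma ee_zero k n : (k < n)%nat -> ee k n = 0.
Proof. intros H. unfold ee. rewrite poch_neg_zero by auto. unfold Cdiv. ring. Qed.

Lemma ee_partial k n : csum (ee (S k)) (S n) = ee k n.
Proof.
  induction n.
  - simpl. rewrite !ee_0. ring.
  - change (csum (ee (S k)) (S (S n))) with (csum (ee (S k)) (S n) + ee (S k) (S n)).
    rewrite IHn, ee_E3. ring.
Qed.

Lemma ee_sum k N : (k < N)%nat -> csum (ee k) N = if (k =? 0)%nat then 1 else 0.
Proof.
  intros H. destruct k as [|k].
  - destruct N; [lia|]. rewrite csum_shift, ee_0.
    rewrite (csum_ext _ (fun _ => RtoC 0)) by (intros; apply ee_zero; lia).
    rewrite csum_zero. simpl. ring.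
  - destruct N; [lia|]. rewrite ee_partial, ee_zero by lia. reflexivity.
Qed.

Lemma cpow_m1_S k : cpow (- RtoC 1) (S k) = - cpow (- RtoC 1) k.
Proof. change (cpow (- RtoC 1) (S k)) with (cpow (- RtoC 1) k * (- RtoC 1)). ring. Qed.

Lemma cpow_m1_sq k : cpow (- RtoC 1) k * cpow (- RtoC 1) k = 1.
Proof. induction k. change (cpow (- RtoC 1) 0) with (RtoC 1). ring. rewrite cpow_m1_S. transitivity (cpow (- RtoC 1) k * cpow (- RtoC 1) k). ring. exact IHk. Qed.

Lemma T_lemma N j k : (k < N)%nat ->
  csum (fun n => ee k n * cpow (RtoC (INR n)) j) N
  = cpow (- RtoC 1) k * RtoC (INR (fact k)) * RtoC (INR (stirling2 j k)).
Proof.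
  revert k. induction j; intros k Hk.
  - rewrite (csum_ext _ (ee k)) by (intros; unfold cpow; simpl; ring).
    rewrite ee_sum by auto. destruct k.
    + simpl. unfold cpow; simpl. ring.
    + simpl. ring.
  - destruct k as [|k].
    + rewrite (csum_ext _ (fun _ => RtoC 0)).
      * rewrite csum_zero. simpl. ring.
      * intros n _. change (cpow (RtoC (INR n)) (S j)) with (cpow (RtoC (INR n)) j * RtoC (INR n)).
        destruct n. simpl. ring. rewrite ee_zero by lia. ring.
    + rewrite (csum_ext _ (fun n => RtoC (INR (S k)) * (ee (S k) n * cpow (RtoC (INR n)) j)
                                   + (- RtoC (INR (S k))) * (ee k n * cpow (RtoC (INR n)) j))).
      2:{ intros n _. change (cpow (RtoC (INR n)) (S j)) with (cpow (RtoC (INR n)) j * RtoC (INR n)).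
          transitivity ((RtoC (INR n) * ee (S k) n) * cpow (RtoC (INR n)) j). ring.
          rewrite ee_E1. ring. }
      rewrite csum_plus, !csum_scal, !IHj by lia.
      change (stirling2 (S j) (S k)) with (stirling2 j k + S k * stirling2 j (S k))%nat.
      rewrite cpow_m1_S, plus_INR, mult_INR, !RtoC_plus, !RtoC_mult.
      rewrite fact_simpl, mult_INR, RtoC_mult. ring.
Qed.

Definition prodp (n : nat) (l : list C) := fold_right (fun a acc => poch a n * acc) (RtoC 1) l.

Lemma poch_comm x y n : poch (x + RtoC (INR y)) n * poch x y = poch x n * poch (x + RtoC (INR n)) y.
Proof.
  rewrite <- poch_add, Cmult_comm, <- poch_add, Nat.add_comm. reflexivity.
Qed.

Lemma V1 n : forall f m, length f = length m ->
  prodp n (vadd f m) * poch_vec f m = prodp n f * poch_vec (map (fun fi => fi + RtoC (INR n)) f) m.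
Proof.
  induction f as [|x f IH]; intros [|y m] H; simpl in H; try discriminate.
  - unfold prodp, poch_vec; simpl. ring.
  - unfold prodp, poch_vec, vadd in *. simpl. injection H as H.
    specialize (IH m H).
    transitivity ((poch (x + RtoC (INR y)) n * poch x y) *
      (fold_right (fun a acc => poch a n * acc) (RtoC 1) (map (fun p => fst p + RtoC (INR (snd p))) (combine f m)) *
       fold_right (fun p acc => poch (fst p) (snd p) * acc) (RtoC 1) (combine f m))). ring.
    rewrite IH, poch_comm. ring.
Qed.

Lemma V2 n : forall f, (forall i l, (i < length f)%nat -> nth i f (RtoC 0) <> - RtoC (INR l)) -> prodp n f <> 0.
Proof.
  induction f as [|x f IH]; intros H.
  - unfold prodp; simpl. intro E. apply (f_equal fst) in E. simpl in E. lra.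
  - unfold prodp in *; simpl. apply Cmult_neq_0.
    + apply poch_nz. intros l. apply (H 0%nat l). simpl; lia.
    + apply IH. intros i l Hi. apply (H (S i) l). simpl; lia.
Qed.

Lemma poch_reflect w n : poch w n = cpow (- RtoC 1) n * poch (1 - w - RtoC (INR n)) n.
Proof.
  revert w. induction n; intros w.
  - change (cpow (- RtoC 1) 0) with (RtoC 1). rewrite !poch_0. ring.
  - rewrite poch_S, IHn, poch_S_left, cpow_m1_S.
    replace (1 - w - RtoC (INR (S n)) + 1) with (1 - w - RtoC (INR n)) by (rewrite RC_INR_S; ring).
    rewrite RC_INR_S. ring.
Qed.

Lemma V3_comp (g : C) (y n : nat) :
  poch g y * poch (1 - g) n = poch (1 - g - RtoC (INR y)) n * poch (g - RtoC (INR n)) y.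
Proof.
  rewrite (poch_reflect (1 - g)), (poch_reflect (1 - g - RtoC (INR y))).
  replace (1 - (1 - g) - RtoC (INR n)) with (g - RtoC (INR n)) by ring.
  replace (1 - (1 - g - RtoC (INR y)) - RtoC (INR n)) with (g - RtoC (INR n) + RtoC (INR y)) by ring.
  assert (E : poch (g - RtoC (INR n)) n * poch g y = poch (g - RtoC (INR n)) y * poch (g - RtoC (INR n) + RtoC (INR y)) n).
  { replace g with (g - RtoC (INR n) + RtoC (INR n)) at 2 by ring.
    rewrite <- poch_add, <- poch_add, Nat.add_comm. reflexivity. }
  transitivity (cpow (- RtoC 1) n * (poch (g - RtoC (INR n)) n * poch g y)). ring.
  rewrite E. ring.
Qed.

Lemma V3 (b : C) n : forall f m, length f = length m ->
  poch_vec (map (fun fi => fi - b) f) m * prodp n (map (fun fi => RtoC 1 - fi + b) f)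
  = prodp n (map (fun p => RtoC 1 - fst p + b - RtoC (INR (snd p))) (combine f m))
    * poch_vec (map (fun fi => fi - b - RtoC (INR n)) f) m.
Proof.
  induction f as [|x f IH]; intros [|y m] H; simpl in H; try discriminate.
  - unfold prodp, poch_vec; simpl. ring.
  - unfold prodp, poch_vec in *. simpl. injection H as H.
    specialize (IH m H).
    transitivity ((poch (x - b) y * poch (RtoC 1 - x + b) n) *
      (fold_right (fun p acc => poch (fst p) (snd p) * acc) (RtoC 1) (combine (map (fun fi => fi - b) f) m) *
       fold_right (fun a acc => poch a n * acc) (RtoC 1) (map (fun fi => RtoC 1 - fi + b) f))). ring.
    rewrite IH.
    replace (RtoC 1 - x + b) with (1 - (x - b)) by ring.
    rewrite V3_comp.
    replace (1 - (x - b) - RtoC (INR y)) with (RtoC 1 - x + b - RtoC (INR y)) by ring.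
    replace (x - b - RtoC (INR n)) with (x - b - RtoC (INR n)) by ring. ring.
Qed.

Lemma cpow_1 n : cpow (RtoC 1) n = 1.
Proof. induction n. reflexivity. change (cpow (RtoC 1) (S n)) with (cpow (RtoC 1) n * RtoC 1). rewrite IHn. ring. Qed.

Lemma Dpoly (alpha : nat -> C) (P : C -> C) M
  (hP : forall t, P t = csum (fun j => alpha j * cpow t j) (S M)) z :
  csum (fun k => cpow (- RtoC 1) k *
     csum (fun j => if (k <=? j)%nat then alpha j * RtoC (INR (stirling2 j k)) else RtoC 0) (S M)
     * poch z k) (S M) = P (- z).
Proof.
  rewrite (csum_ext _ (fun k => csum (fun j => (if (k <=? j)%nat then alpha j * RtoC (INR (stirling2 j k)) else RtoC 0) * ff (- z) k) (S M))).
  2:{ intros k _. rewrite <- ff_poch. replace (- - z) with z by ring.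
      transitivity (cpow (- RtoC 1) k * poch z k *
        csum (fun j => if (k <=? j)%nat then alpha j * RtoC (INR (stirling2 j k)) else RtoC 0) (S M)). ring.
      rewrite <- csum_scal. apply csum_ext. intros j _. ring. }
  rewrite csum_swap, hP. apply csum_ext. intros j Hj.
  rewrite (stir_pow (- z) j M) by lia. rewrite <- csum_scal. apply csum_ext. intros k _.
  destruct (k <=? j)%nat eqn:E.
  - ring.
  - apply Nat.leb_gt in E. rewrite stirling2_zero by lia. simpl INR. ring.
Qed.

Theorem corollary1 (r : nat) (f : list C) (m : list nat) (a b c x : C)
  (alpha : nat -> C) :
  (1 <= r)%nat -> length f = r -> length m = r ->
  poch_vec f m <> RtoC 0 ->
  (forall i n, (i < r)%nat -> nth i f (RtoC 0) <> - RtoC (INR n)) ->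
  (forall n : nat, c <> - RtoC (INR n)) ->
  (* alpha_j are the coefficients of t |-> (f - b - t)_m, a polynomial of degree m *)
  (forall t : C, poch_vec (map (fun fi => fi - b - t) f) m
                 = csum (fun j => alpha j * cpow t j) (S (sumn m))) ->
  Cmod x < 1 ->
  let M := sumn m in
  let D := fun k : nat =>
    csum (fun j => if (k <=? j)%nat then alpha j * RtoC (INR (stirling2 j k))
                   else RtoC 0) (S M) in
  is_series (V := C_NormedModule)
    (hyp_term (a :: b :: vadd f m) (c :: f) x)
    (/ poch_vec f m *
     csum (fun k => cpow (- RtoC 1) k * D k * poch b k
                    * hypF (a :: b + RtoC (INR k) :: nil) (c :: nil) x) (S M))
  /\
  (forall k : nat, (k <= M)%nat ->
     (forall n, (n <= k)%nat ->
        fold_right (fun p acc => poch p n * acc) (RtoC 1)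
          (map (fun p => RtoC 1 - fst p + b - RtoC (INR (snd p))) (combine f m))
        <> RtoC 0) ->
     D k = cpow (- RtoC 1) k
           * poch_vec (map (fun fi => fi - b) f) m / RtoC (INR (fact k))
           * hypF (- RtoC (INR k) :: map (fun fi => RtoC 1 - fi + b) f)
                  (map (fun p => RtoC 1 - fst p + b - RtoC (INR (snd p)))
                       (combine f m))
                  (RtoC 1)).
Proof.
  intros Hr Hf Hm HP Hfi Hc hP Hx M D.
  assert (Hlen : length f = length m) by congruence.
  assert (Hfi' : forall i l, (i < length f)%nat -> nth i f (RtoC 0) <> - RtoC (INR l)).
  { intros i l Hi. apply Hfi. lia. }
  split.
  -
    apply (is_series_ext (fun n => / poch_vec f m *
       csum (fun k => cpow (- RtoC 1) k * D k * poch b k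
                    * hyp_term (a :: b + RtoC (INR k) :: nil) (c :: nil) x n) (S M))).
    + intros n. match goal with |- ?A = ?B => change (@eq C A B) end.
      rewrite (csum_ext _ (fun k => (poch a n * poch b n / poch c n * cpow x n / RtoC (INR (fact n)))
                 * (cpow (- RtoC 1) k * D k * poch (b + RtoC (INR n)) k))).
      2:{ intros k _. unfold hyp_term. simpl fold_right.
          assert (E := poch_comm b k n).
          assert (H1 := poch_nz c n Hc). assert (H2 := fact_nz n).
          transitivity (poch a n / poch c n * cpow x n / RtoC (INR (fact n)) * cpow (- RtoC 1) k * D k *
                        (poch (b + RtoC (INR k)) n * poch b k)).
          field. split; auto. rewrite E. field. split; auto. }
      rewrite csum_scal.
      rewrite (Dpoly alpha (fun t => poch_vec (map (fun fi => fi - b - t) f) m) M hP).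
      rewrite (map_ext (fun fi => fi - b - - (b + RtoC (INR n))) (fun fi => fi + RtoC (INR n)))
        by (intros; ring).
      assert (EV := V1 n f m Hlen).
      assert (HF := V2 n f Hfi').
      unfold prodp in EV, HF.
      unfold hyp_term. simpl fold_right.
      assert (H1 := poch_nz c n Hc). assert (H2 := fact_nz n).
      set (W := fold_right (fun a0 acc => poch a0 n * acc) (RtoC 1) (vadd f m)) in *.
      set (F := fold_right (fun a0 acc => poch a0 n * acc) (RtoC 1) f) in *.
      assert (EW : W = F * poch_vec (map (fun fi => fi + RtoC (INR n)) f) m / poch_vec f m).
      { rewrite <- EV. field. auto. }
      rewrite EW. field. repeat split; auto.
    + apply is_series_scalC. apply is_series_csum. intros k _.
      apply is_series_scalC.
      destruct (conv2F1 a (b + RtoC (INR k)) c x Hc Hx) as [l Hl].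
      rewrite (hypF_spec _ _ _ l Hl). exact Hl.
  -
    intros k Hk Hden.
    set (L1 := - RtoC (INR k) :: map (fun fi => RtoC 1 - fi + b) f).
    set (L2 := map (fun p => RtoC 1 - fst p + b - RtoC (INR (snd p))) (combine f m)).
    assert (Hs : is_series (V := C_NormedModule) (hyp_term L1 L2 (RtoC 1)) (csum (hyp_term L1 L2 (RtoC 1)) (S k))).
    { apply is_series_fin. intros n Hn. unfold hyp_term, L1. simpl fold_right.
      rewrite poch_neg_zero by auto. unfold Cdiv. ring. }
    rewrite (hypF_spec _ _ _ _ Hs).
    set (G := poch_vec (map (fun fi => fi - b) f) m).
    assert (Hkf := fact_nz k).
    transitivity (cpow (- RtoC 1) k / RtoC (INR (fact k)) * csum (fun n => G * hyp_term L1 L2 (RtoC 1) n) (S k)).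
    2:{ rewrite (csum_scal G (hyp_term L1 L2 (RtoC 1))). field. auto. }
    rewrite (csum_ext _ (fun n => csum (fun j => alpha j * (ee k n * cpow (RtoC (INR n)) j)) (S M))).
    2:{ intros n Hn.
        assert (HV := Hden n ltac:(lia)). fold L2 in HV.
        assert (E3 := V3 b n f m Hlen). unfold prodp in E3. fold L2 in E3.
        rewrite hP in E3.
        rewrite (csum_ext (fun j => alpha j * (ee k n * cpow (RtoC (INR n)) j)) (fun j => ee k n * (alpha j * cpow (RtoC (INR n)) j)))
          by (intros; ring).
        rewrite csum_scal.
        unfold hyp_term, L1. simpl fold_right. rewrite cpow_1. fold G in E3.
        assert (Hfn := fact_nz n).
        transitivity (poch (- RtoC (INR k)) n * (G * fold_right (fun a0 acc => poch a0 n * acc) (RtoC 1) (map (fun fi => RtoC 1 - fi + b) f))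
           / fold_right (fun b0 acc => poch b0 n * acc) (RtoC 1) L2 / RtoC (INR (fact n))).
        field. split; auto.
        rewrite E3. unfold ee. change (sumn m) with M. field. split; auto. }
    rewrite <- csum_swap.
    rewrite (csum_ext _ (fun j => (cpow (- RtoC 1) k * RtoC (INR (fact k))) * (alpha j * RtoC (INR (stirling2 j k))))).
    2:{ intros j _. rewrite csum_scal, T_lemma by lia. ring. }
    rewrite csum_scal.
    unfold D. rewrite (csum_ext _ (fun j => alpha j * RtoC (INR (stirling2 j k)))).
    2:{ intros j _. destruct (k <=? j)%nat eqn:E. reflexivity.
        apply Nat.leb_gt in E. rewrite stirling2_zero by lia. simpl INR. ring. }
    assert (Hsq := cpow_m1_sq k).
    transitivity ((cpow (- RtoC 1) k * cpow (- RtoC 1) k) * csum (fun j => alpha j * RtoC (INR (stirling2 j k))) (S M)).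
    rewrite Hsq. ring.
    field. auto.
Qed.
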